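(* Let $z=(z_1,\ldots,z_n)$ be a sequence of nonnegative real numbers, and let $f_z(a)=\sum_{i=1}^n |z_i-a_i|$ for $a\in\mathbb{R}^n$. Let $d\in DS_n$ be a minimizer of $f_z$ over $DS_n$. Then there exists $d^*\in DS_n$ such that $d^*_i\le \lceil z_i\rceil$ for all $i$ and $f_z(d^* )=f_z(d)$.
   Context: All graphs are simple (no loops, no multiple edges) on the vertex set $\{1,\ldots,n\}$. The degree sequence of such a graph is the vector $(d_1,\ldots,d_n)$ where $d_i$ is the number of neighbours of vertex $i$. $DS_n$ denotes the set of all degree sequences of simple graphs on $\{1,\ldots,n\}$. $\lceil x\rceil$ is the ceiling of $x$. *)

(* Defs.v *)
From mathcomp Require Import all_boot all_order all_algebra.
From mathcomp Require Import reals.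
Set Implicit Arguments. Unset Strict Implicit. Unset Printing Implicit Defensive.
Import Order.TTheory GRing.Theory Num.Theory.
Local Open Scope ring_scope.

Definition simple_graph (n : nat) (e : rel 'I_n) : Prop :=
  irreflexive e /\ symmetric e.

Definition degree (n : nat) (e : rel 'I_n) (i : 'I_n) : nat :=
  #|[pred j | e i j]|.

Definition is_degseq (n : nat) (d : 'I_n -> nat) : Prop :=
  exists e : rel 'I_n, simple_graph e /\ forall i, d i = degree e i.

Definition fz (R : realType) (n : nat) (z : 'I_n -> R) (a : 'I_n -> nat) : R :=
  \sum_(i < n) `|z i - (a i)%:R|.

(* Main.v *)
Require Import Defs.
From mathcomp Require Import all_boot all_order all_algebra.
From mathcomp Require Import reals.
From mathcomp Require Import zify.
Import Order.TTheory GRing.Theory Num.Theory.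
Set Implicit Arguments. Unset Strict Implicit.
Local Open Scope ring_scope.

Definition rem_edge (n : nat) (e : rel 'I_n) (a b : 'I_n) : rel 'I_n :=
  fun x y => e x y && ~~ ([&& x == a & y == b] || [&& x == b & y == a]).

Lemma rem_simple n (e : rel 'I_n) a b : simple_graph e -> simple_graph (rem_edge e a b).
Proof.
case=> irr sym; split.
  by move=> x; rewrite /rem_edge irr.
move=> x y; rewrite /rem_edge sym; congr (_ && ~~ _).
by rewrite orbC; congr (_ || _); rewrite andbC.
Qed.

Lemma deg_rem_other n (e : rel 'I_n) a b k : k != a -> k != b ->
  degree (rem_edge e a b) k = degree e k.
Proof.
move=> ka kb; apply: eq_card => y; rewrite !inE /rem_edge.
have -> : (k == a) = false by exact: negbTE ka.
have -> : (k == b) = false by exact: negbTE kb.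
by rewrite /= andbT.
Qed.

Lemma deg_rem_le n (e : rel 'I_n) a b k :
  (degree (rem_edge e a b) k <= degree e k)%N.
Proof.
apply: subset_leq_card; apply/subsetP => y; rewrite !inE /rem_edge.
by case/andP.
Qed.

Lemma deg_rem_a n (e : rel 'I_n) a b : a != b -> e a b ->
  degree e a = (degree (rem_edge e a b) a).+1.
Proof.
move=> ab eab; rewrite /degree (cardD1 b) inE eab add1n; congr _.+1.
apply: eq_card => y; rewrite !inE /rem_edge eqxx /=.
have -> : (a == b) = false by exact: negbTE ab.
by rewrite /= orbF andbC.
Qed.

Lemma deg_rem_b n (e : rel 'I_n) a b : a != b -> e b a ->
  degree e b = (degree (rem_edge e a b) b).+1.
Proof.
move=> ab eba; rewrite /degree (cardD1 a) inE eba add1n; congr _.+1.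
apply: eq_card => y; rewrite !inE /rem_edge eqxx /=.
have -> : (b == a) = false by rewrite eq_sym; exact: negbTE ab.
by rewrite /= andbC.
Qed.

From mathcomp Require Import lra.

Lemma fz_rem (R : realType) n (z : 'I_n -> R) (e : rel 'I_n) i j :
  i != j -> e i j -> e j i ->
  z i <= (degree (rem_edge e i j) i)%:R ->
  fz z (degree (rem_edge e i j)) <= fz z (degree e).
Proof.
move=> ij eij eji hz.
have ji : j != i by rewrite eq_sym.
rewrite /fz (bigD1 i) //= [in X in _ <= X](bigD1 i) //=.
rewrite (bigD1 j) //= [in X in _ <= X](bigD1 j) //=.
rewrite (eq_bigr (fun k => `|z k - (degree e k)%:R|)); last first.
  by move=> k /andP[ki kj]; rewrite deg_rem_other.
rewrite (deg_rem_a ij eij) (deg_rem_b ij eji).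
set x := degree (rem_edge e i j) i.
set y := degree (rem_edge e i j) j.
set S := \sum_(k | _) _.
have h1 : `|z i - x%:R| = x%:R - z i by rewrite distrC ger0_norm ?subr_ge0.
have h2 : `|z i - x.+1%:R| = x%:R + 1 - z i.
  by rewrite distrC ger0_norm -natr1 ?subr_ge0 //; lra.
have h3 : `|z j - y%:R| <= `|z j - y.+1%:R| + 1.
  apply: le_trans (ler_distD (y.+1%:R) _ _) _.
  by rewrite -natr1 addrAC subrr add0r normr1.
lra.
Qed.

Lemma step (R : realType) n (z : 'I_n -> R) (hz : forall i, 0 <= z i)
  (e : rel 'I_n) : simple_graph e ->
  (forall k, ((degree e k)%:Z <= Num.ceil (z k))%R) \/
  exists e', [/\ simple_graph e',
     (\sum_(k < n) degree e' k < \sum_(k < n) degree e k)%N &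
     fz z (degree e') <= fz z (degree e)].
Proof.
move=> se; case: (pickP (fun k => ~~ ((degree e k)%:Z <= Num.ceil (z k)))) => [i hi|hall]; last first.
  by left=> k; move: (hall k) => /negbFE.
right.
have c0 : 0 <= Num.ceil (z i) by rewrite ceil_ge0; apply: lt_le_trans (hz i); rewrite ltrN10.
have dpos : (0 < degree e i)%N.
  move: hi; rewrite /= -ltNge => hi.
  by have := le_lt_trans c0 hi; rewrite -(ltz_nat 0).
case/card_gt0P: dpos => j; rewrite inE => eij.
case: se => irr sym.
have ij : i != j by apply/eqP => eq; move: eij; rewrite eq irr.
have eji : e j i by rewrite sym.
exists (rem_edge e i j); split.
- exact: rem_simple.
- rewrite (bigD1 i) //= [in X in (_ < X)%N](bigD1 i) //= (deg_rem_a ij eij).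
  have : (\sum_(k < n | k != i) degree (rem_edge e i j) k <= \sum_(k < n | k != i) degree e k)%N.
    by apply: leq_sum => k _; apply: deg_rem_le.
  by move=> h; rewrite addSn ltnS leq_add2l.
- apply: fz_rem => //.
  move: hi; rewrite /= (deg_rem_a ij eij) => hi.
  have : Num.ceil (z i) <= (degree (rem_edge e i j) i)%:Z.
    by rewrite -ltzD1 addrC -intS ltNge.
  by rewrite ceil_le_int.
Qed.

Lemma main (R : realType) (n : nat) (z : 'I_n -> R)
  (hz : forall i, 0 <= z i)
  (d : 'I_n -> nat)
  (hmin : forall d' : 'I_n -> nat, is_degseq d' -> fz z d <= fz z d') m :
  forall e : rel 'I_n, simple_graph e -> (\sum_(k < n) degree e k <= m)%N ->
  fz z (degree e) <= fz z d ->
  exists dstar : 'I_n -> nat,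
    [/\ is_degseq dstar,
        (forall i, (dstar i)%:Z <= Num.ceil (z i))%R
      & fz z dstar = fz z d].
Proof.
elim: m => [|m IH] e se hs hf.
  case: (step hz se) => [hall|[e' [_ lt _]]]; last by move: lt hs; lia.
  exists (degree e); split => //; first by exists e.
  by apply/eqP; rewrite eq_le hf hmin //; exists e.
case: (step hz se) => [hall|[e' [se' lt hf']]].
  exists (degree e); split => //; first by exists e.
  by apply/eqP; rewrite eq_le hf hmin //; exists e.
apply: (IH e' se'); first by move: lt hs; lia.
exact: le_trans hf' hf.
Qed.

Theorem lemma5 (R : realType) (n : nat) (z : 'I_n -> R)
  (hz : forall i, 0 <= z i)
  (d : 'I_n -> nat) (hd : is_degseq d)
  (hmin : forall d' : 'I_n -> nat, is_degseq d' -> fz z d <= fz z d') :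
  exists dstar : 'I_n -> nat,
    [/\ is_degseq dstar,
        (forall i, (dstar i)%:Z <= Num.ceil (z i))%R
      & fz z dstar = fz z d].
Proof.
case: hd => e [se hde].
have hf : fz z (degree e) <= fz z d.
  have -> : fz z d = fz z (degree e) by apply: eq_bigr => k _; rewrite hde.
  exact: lexx.
exact: (main hz hmin se (leqnn _) hf).
Qed.
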